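(* Assume $C_L<C_R$ and consider a wave sequence $U_L\xrightarrow{S_1}U_1\xrightarrow{C}U_2\xrightarrow{S_2}U_R$ with $U_L\ne U_R$, consisting of an admissible $S$-wave, an admissible $C$-wave and an admissible $S$-wave. This sequence is compatible if and only if $U_L\in\mathcal{R}$, $U_1\in\mathcal{T}$, $U_2\in\mathcal{L}$ and $0\le S_R\le S^k(U_2)$.
   Context: System: $\partial_t S+\partial_x f(S,C)=0$, $\partial_t[(S+\mathcal{A})C]+\partial_x[f(S,C)C]=0$, with $\mathcal{A}>0$ constant and states $U=(S,C)\in[0,1]^2$. The flux $f$ satisfies: (a) $f\in\mathscr{C}^2$, $f(0,C)=0$, $f(1,C)=1$, $\partial_Sf(0,C)=\partial_Sf(1,C)=0$; (b) for each $C$, $f(\cdot,C)$ is strictly increasing and S-shaped with a single inflection point (convex then concave); (c) $\partial_Cf>0$ for $0<S<1$. Eigenvalues: $\lambda_C(S,C)=f(S,C)/(S+\mathcal{A})$, $\lambda_S(S,C)=\partial_Sf(S,C)$. Transition curve $\mathcal{T}=\{\lambda_S=\lambda_C\}$, $\mathcal{L}=\{\lambda_S>\lambda_C\}$, $\mathcal{R}=\{\lambda_S<\lambda_C\}$; for each $C$, $\mathcal{T}$ contains exactly one point $(S^*(C),C)$ with $S^*(C)\in(0,1)$. For a state $U=(S,C)$, $S^k(U)$ denotes the value $S'\in[0,1]$, $S'\ne S$, with $\lambda_C(S',C)=\lambda_C(U)$; $S^k(U)=+\infty$ if no such $S'$ exists, and $S^k(U)=S^*(C)$ if $S=S^*(C)$.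 An $S$-wave from $U_a$ to $U_b$ requires $C_a=C_b=C$ and is the solution of the scalar Riemann problem $\partial_tS+\partial_xf(S,C)=0$ with left state $S_a$, right state $S_b$, built from shocks satisfying Oleinik's entropy condition and rarefactions; its initial velocity $v_i$ and final velocity $v_f$ are the smallest and largest propagation speeds in that fan. A $C$-wave from $U_a$ to $U_b$ is a contact discontinuity with $\lambda_C(U_a)=\lambda_C(U_b)$, speed $v_i=v_f=\lambda_C(U_a)$; it is admissible iff $U_a,U_b$ both lie in $\mathcal{L}\cup\mathcal{T}$ or both in $\mathcal{R}\cup\mathcal{T}$. A wave sequence is compatible iff for each pair of consecutive waves $a$ then $b$, $v_f^a\le v_i^b$. *)

(* Defs.v *)
From Stdlib Require Import Reals Classical ClassicalEpsilon List.
From Coquelicot Require Import Coquelicot.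
Open Scope R_scope.

(* A state U = (S, C). *)
Definition state := (R * R)%type.
Definition inBox (U : state) : Prop := 0 <= fst U <= 1 /\ 0 <= snd U <= 1.

Definition dS (g : R -> R -> R) (S C : R) : R := Derive (fun s => g s C) S.
Definition dC (g : R -> R -> R) (S C : R) : R := Derive (fun c => g S c) C.

Definition C2_flux (f : R -> R -> R) : Prop :=
  forall S C,
    ex_derive (fun s => f s C) S /\ ex_derive (fun c => f S c) C /\
    ex_derive (fun s => dS f s C) S /\ ex_derive (fun c => dS f S c) C /\
    ex_derive (fun s => dC f s C) S /\ ex_derive (fun c => dC f S c) C /\
    continuity_2d_pt f S C /\
    continuity_2d_pt (dS f) S C /\ continuity_2d_pt (dC f) S C /\
    continuity_2d_pt (dS (dS f)) S C /\ continuity_2d_pt (dC (dS f)) S C /\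
    continuity_2d_pt (dS (dC f)) S C /\ continuity_2d_pt (dC (dC f)) S C.

Definition strictly_convex_on (g : R -> R) (a b : R) : Prop :=
  forall x y t, a <= x <= b -> a <= y <= b -> x <> y -> 0 < t < 1 ->
    g (t * x + (1 - t) * y) < t * g x + (1 - t) * g y.

Definition strictly_concave_on (g : R -> R) (a b : R) : Prop :=
  strictly_convex_on (fun x => - g x) a b.

Definition flux_hyp (f : R -> R -> R) : Prop :=
  C2_flux f /\
  (forall C, 0 <= C <= 1 ->
     f 0 C = 0 /\ f 1 C = 1 /\ dS f 0 C = 0 /\ dS f 1 C = 0) /\
  (forall C, 0 <= C <= 1 ->
     (forall x y, 0 <= x -> x < y -> y <= 1 -> f x C < f y C) /\
     exists a, 0 < a < 1 /\
       strictly_convex_on (fun s => f s C) 0 a /\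
       strictly_concave_on (fun s => f s C) a 1) /\
  (forall S C, 0 < S < 1 -> 0 <= C <= 1 -> dC f S C > 0).

Definition lamC (f : R -> R -> R) (A : R) (U : state) : R :=
  f (fst U) (snd U) / (fst U + A).
Definition lamS (f : R -> R -> R) (U : state) : R := dS f (fst U) (snd U).

Definition inL f A (U : state) : Prop := inBox U /\ lamS f U > lamC f A U.
Definition inT f A (U : state) : Prop := inBox U /\ lamS f U = lamC f A U.
Definition inR f A (U : state) : Prop := inBox U /\ lamS f U < lamC f A U.

Definition transition_fun f A (Sstar : R -> R) : Prop :=
  forall C, 0 <= C <= 1 ->
    0 < Sstar C < 1 /\ inT f A (Sstar C, C) /\
    (forall S, 0 < S < 1 -> inT f A (S, C) -> S = Sstar C).

Definition Sk f A (Sstar : R -> R) (U : state) : Rbar :=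
  match excluded_middle_informative (fst U = Sstar (snd U)) with
  | left _ => Finite (Sstar (snd U))
  | right _ =>
    match excluded_middle_informative
            (exists S', 0 <= S' <= 1 /\ S' <> fst U /\
                        lamC f A (S', snd U) = lamC f A U) with
    | left h => Finite (proj1_sig (constructive_indefinite_description _ h))
    | right _ => p_infty
    end
  end.

(* Velocities of the S-wave solving the scalar Riemann problem
   dt S + dx f(S,C) = 0, S(0-)=Sa, S(0+)=Sb (Sa <> Sb), built from Oleinik
   shocks and rarefactions.  Its fan is the derivative of the lower convex
   envelope of f(.,C) on [Sa,Sb] (if Sa<Sb), resp. of the upper concave
   envelope on [Sb,Sa] (if Sb<Sa); the smallest speed (at the Sa end) and the
   largest speed (at the Sb end) are the one-sided derivatives of the envelope
   at the endpoints, i.e. the following extremal secant slopes. *)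
Definition between (a b s : R) : Prop := Rmin a b <= s <= Rmax a b.

Definition vi_S (f : R -> R -> R) (Sa Sb C : R) : Rbar :=
  Glb_Rbar (fun v => exists s, between Sa Sb s /\ s <> Sa /\
                               v = (f s C - f Sa C) / (s - Sa)).
Definition vf_S (f : R -> R -> R) (Sa Sb C : R) : Rbar :=
  Lub_Rbar (fun v => exists s, between Sa Sb s /\ s <> Sb /\
                               v = (f Sb C - f s C) / (Sb - s)).

Inductive wave : Type :=
  | SWave (Ua Ub : state)
  | CWave (Ua Ub : state).

(* An S-wave from Ua to Ub: same C, nontrivial (Sa <> Sb).  S-waves built
   from Oleinik shocks and rarefactions are always admissible. *)
Definition admissible f A (w : wave) : Prop :=
  match w with
  | SWave Ua Ub => snd Ua = snd Ub /\ fst Ua <> fst Ub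
  | CWave Ua Ub =>
      lamC f A Ua = lamC f A Ub /\
      ((  (inL f A Ua \/ inT f A Ua) /\ (inL f A Ub \/ inT f A Ub))
       \/ ((inR f A Ua \/ inT f A Ua) /\ (inR f A Ub \/ inT f A Ub)))
  end.

Definition v_init f A (w : wave) : Rbar :=
  match w with
  | SWave Ua Ub => vi_S f (fst Ua) (fst Ub) (snd Ua)
  | CWave Ua Ub => Finite (lamC f A Ua)
  end.
Definition v_final f A (w : wave) : Rbar :=
  match w with
  | SWave Ua Ub => vf_S f (fst Ua) (fst Ub) (snd Ua)
  | CWave Ua Ub => Finite (lamC f A Ua)
  end.

Fixpoint compatible f A (ws : list wave) : Prop :=
  match ws with
  | nil => True
  | w1 :: rest =>
      match rest with
      | nil => True
      | w2 :: _ => Rbar_le (v_final f A w1) (v_init f A w2) /\ compatible f A rest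
      end
  end.

(* Main.v *)
Require Import Defs.
From Stdlib Require Import Reals List Lra Psatz ClassicalEpsilon.
From Coquelicot Require Import Coquelicot.
Open Scope R_scope.

Definition phi (f : R -> R -> R) (A C s : R) : R := f s C / (s + A).
Definition Dd (f : R -> R -> R) (A C s : R) : R := dS f s C - phi f A C s.

Lemma fder f C s : flux_hyp f -> is_derive (fun s => f s C) s (dS f s C).
Proof. intros hf. destruct hf as [h _]. destruct (h s C) as [e _].
  unfold dS. apply Derive_correct. exact e. Qed.

Lemma fderC f C s : flux_hyp f -> is_derive (fun c => f s c) C (dC f s C).
Proof. intros hf. destruct hf as [h _]. destruct (h s C) as [_ [e _]].
  unfold dC. apply Derive_correct. exact e. Qed.

Lemma phider f A C s : flux_hyp f -> s + A <> 0 ->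
  is_derive (phi f A C) s (Dd f A C s / (s + A)).
Proof. intros hf hs.
  assert (H1 : is_derive (fun t => t + A) s 1).
  { auto_derive; auto; ring. }
  assert (H := is_derive_div _ _ s _ _ (fder f C s hf) H1 hs).
  unfold Dd, phi. replace ((dS f s C - f s C / (s + A)) / (s + A)) with
    ((dS f s C * (s + A) - f s C * 1) / (s + A) ^ 2). exact H.
  field. auto. Qed.

Lemma phi_cont f A C s : flux_hyp f -> s + A <> 0 -> continuity_pt (phi f A C) s.
Proof. intros hf hs. apply derivable_continuous_pt. apply ex_derive_Reals_0.
  eexists. apply phider; auto. Qed.

Lemma Dd_cont f A C s : flux_hyp f -> s + A <> 0 -> continuity_pt (Dd f A C) s.
Proof. intros hf hs. apply derivable_continuous_pt. apply ex_derive_Reals_0.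
  unfold Dd. apply (ex_derive_minus (fun s => dS f s C) (phi f A C)).
  - destruct hf as [h _]. destruct (h s C) as [_ [_ [e _]]]. exact e.
  - eexists. apply phider; auto. Qed.

Lemma incr_lemma (g g' : R -> R) x y : x < y ->
  (forall c, x <= c <= y -> is_derive g c (g' c)) ->
  (forall c, x < c < y -> 0 < g' c) -> g x < g y.
Proof. intros hxy hd hp.
  destruct (MVT_cor2 g g' x y hxy) as [c [e hc]].
  { intros c hc. apply is_derive_Reals. auto. }
  assert (0 < g' c * (y - x)) by (apply Rmult_lt_0_compat; [apply hp; auto| lra]).
  lra. Qed.

Lemma decr_lemma (g g' : R -> R) x y : x < y ->
  (forall c, x <= c <= y -> is_derive g c (g' c)) ->
  (forall c, x < c < y -> g' c < 0) -> g y < g x.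
Proof. intros hxy hd hp.
  destruct (MVT_cor2 g g' x y hxy) as [c [e hc]].
  { intros c hc. apply is_derive_Reals. auto. }
  assert (0 < - g' c * (y - x)) by (apply Rmult_lt_0_compat; [ specialize (hp c hc); lra| lra]).
  lra. Qed.

Lemma sign_const (g : R -> R) p q : p <= q ->
  (forall s, p <= s <= q -> continuity_pt g s) ->
  (forall s, p <= s <= q -> g s <> 0) -> g p < 0 -> g q < 0.
Proof. intros hpq hc hn hp.
  destruct (Rlt_or_le (g q) 0) as [h|h]; auto.
  destruct (Req_dec p q) as [e|ne]. { subst; lra. }
  exfalso. assert (h' : 0 < g q) by (assert (g q <> 0) by (apply hn; lra); lra).
  destruct (Ranalysis5.IVT_interv g p q hc ltac:(lra) hp h') as [z [hz ez]].
  apply (hn z hz ez). Qed.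

Lemma sign_const' (g : R -> R) p q : p <= q ->
  (forall s, p <= s <= q -> continuity_pt g s) ->
  (forall s, p <= s <= q -> g s <> 0) -> 0 < g q -> 0 < g p.
Proof. intros hpq hc hn hq.
  destruct (Rlt_or_le 0 (g p)) as [h|h]; auto.
  assert (g p <> 0) by (apply hn; lra).
  assert (g q < 0) by (apply (sign_const g p q); auto; lra). lra. Qed.

Section S.
Context (f : R -> R -> R) (A : R) (Sstar : R -> R) (hA : 0 < A) (hf : flux_hyp f)
  (hT : transition_fun f A Sstar).

Lemma f_inc C x y : 0 <= C <= 1 -> 0 <= x -> x < y -> y <= 1 -> f x C < f y C.
Proof. intros hC. destruct hf as [_ [_ [h _]]]. destruct (h C hC) as [h' _]. apply h'. Qed.

Lemma f_0 C : 0 <= C <= 1 -> f 0 C = 0.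
Proof. intros hC. destruct hf as [_ [h _]]. apply (h C hC). Qed.
Lemma f_1 C : 0 <= C <= 1 -> f 1 C = 1.
Proof. intros hC. destruct hf as [_ [h _]]. apply (h C hC). Qed.
Lemma dS_0 C : 0 <= C <= 1 -> dS f 0 C = 0.
Proof. intros hC. destruct hf as [_ [h _]]. apply (h C hC). Qed.
Lemma dS_1 C : 0 <= C <= 1 -> dS f 1 C = 0.
Proof. intros hC. destruct hf as [_ [h _]]. apply (h C hC). Qed.

Lemma phi_0 C : 0 <= C <= 1 -> phi f A C 0 = 0.
Proof. intros hC. unfold phi. rewrite f_0; auto. unfold Rdiv; ring. Qed.

Lemma phi_pos C s : 0 <= C <= 1 -> 0 < s <= 1 -> 0 < phi f A C s.
Proof. intros hC hs. unfold phi. apply Rdiv_lt_0_compat; [|lra].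
  rewrite <- (f_0 C hC). apply f_inc; lra. Qed.

Lemma Dd_0 C : 0 <= C <= 1 -> Dd f A C 0 = 0.
Proof. intros hC. unfold Dd. rewrite phi_0, dS_0; auto; ring. Qed.

Lemma Dd_1 C : 0 <= C <= 1 -> Dd f A C 1 < 0.
Proof. intros hC. unfold Dd, phi. rewrite dS_1, f_1; auto.
  assert (0 < 1 / (1 + A)) by (apply Rdiv_lt_0_compat; lra). lra. Qed.

Lemma Dd_eq_T C s : 0 <= C <= 1 -> 0 <= s <= 1 -> Dd f A C s = 0 -> inT f A (s, C).
Proof. intros hC hs e. split. split; simpl; auto. unfold lamS, lamC; simpl.
  unfold Dd, phi in e. lra. Qed.

Lemma Dd_a C : 0 <= C <= 1 -> Dd f A C (Sstar C) = 0.
Proof. intros hC. destruct (hT C hC) as [_ [[_ e] _]]. unfold Dd, phi.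
  unfold lamS, lamC in e; simpl in e. lra. Qed.

Lemma a_range C : 0 <= C <= 1 -> 0 < Sstar C < 1.
Proof. intros hC. apply (hT C hC). Qed.

Lemma Dd_nz C s : 0 <= C <= 1 -> 0 < s < 1 -> s <> Sstar C -> Dd f A C s <> 0.
Proof. intros hC hs hn e. apply hn. destruct (hT C hC) as [_ [_ h]].
  apply h; auto. apply Dd_eq_T; auto; lra. Qed.

Lemma Dd_neg C s : 0 <= C <= 1 -> Sstar C < s <= 1 -> Dd f A C s < 0.
Proof. intros hC hs. pose proof (a_range C hC).
  destruct (Req_dec s 1) as [->|n1]. apply Dd_1; auto.
  destruct (Rlt_or_le (Dd f A C s) 0) as [h|h]; auto. exfalso.
  assert (Dd f A C s <> 0) by (apply Dd_nz; auto; lra).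
  assert (0 < Dd f A C s) by lra.
  assert (0 < Dd f A C 1).
  { assert (- Dd f A C 1 < 0); [|lra].
    apply (sign_const (fun t => - Dd f A C t) s 1); [lra| | |lra].
    - intros t ht. apply continuity_pt_opp. apply Dd_cont; auto; lra.
    - intros t ht e. destruct (Req_dec t 1) as [->|n]. pose proof (Dd_1 C hC); lra.
      apply (Dd_nz C t hC); lra. }
  pose proof (Dd_1 C hC). lra.
Qed.

Lemma Dd_pos C s : 0 <= C <= 1 -> 0 < s < Sstar C -> 0 < Dd f A C s.
Proof. intros hC hs. pose proof (a_range C hC).
  assert (hnz : forall t, 0 < t < Sstar C -> Dd f A C t <> 0).
  { intros t ht. apply Dd_nz; auto; lra. }
  assert (hct : forall t, 0 < t < Sstar C -> continuity_pt (Dd f A C) t).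
  { intros t ht. apply Dd_cont; auto; lra. }
  destruct (Rlt_or_le 0 (Dd f A C s)) as [h|h]; auto. exfalso.
  assert (hs0 : Dd f A C s < 0) by (pose proof (hnz s hs); lra).
  assert (hall : forall t, 0 < t < Sstar C -> Dd f A C t < 0).
  { intros t ht. destruct (Rle_or_lt s t) as [l|l].
    - apply (sign_const _ s t); auto. intros u hu; apply hct; lra.
      intros u hu; apply hnz; lra.
    - destruct (Rlt_or_le (Dd f A C t) 0) as [h2|h2]; auto.
      assert (0 < Dd f A C t) by (pose proof (hnz t ht); lra).
      assert (- Dd f A C s < 0); [|lra].
      apply (sign_const (fun u => - Dd f A C u) t s); [lra| | |lra].
      intros u hu; apply continuity_pt_opp; apply hct; lra.
      intros u hu e; apply (hnz u); lra. }
  assert (phi f A C (Sstar C) < phi f A C 0).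
  { apply (decr_lemma _ (fun c => Dd f A C c / (c + A))); [lra| |].
    intros c hc; apply phider; auto; lra.
    intros c hc. assert (Dd f A C c < 0) by (apply hall; auto).
    assert (0 < - Dd f A C c / (c + A)) by (apply Rdiv_lt_0_compat; lra).
    unfold Rdiv in *; lra. }
  rewrite phi_0 in H0; auto. pose proof (phi_pos C (Sstar C) hC ltac:(lra)). lra.
Qed.

Lemma phi_inc C x y : 0 <= C <= 1 -> 0 <= x -> x < y -> y <= Sstar C ->
  phi f A C x < phi f A C y.
Proof. intros hC hx hxy hy. pose proof (a_range C hC).
  apply (incr_lemma _ (fun c => Dd f A C c / (c + A))); [lra| |].
  intros c hc; apply phider; auto; lra.
  intros c hc. apply Rdiv_lt_0_compat; [apply Dd_pos|]; auto; lra. Qed.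

Lemma phi_dec C x y : 0 <= C <= 1 -> Sstar C <= x -> x < y -> y <= 1 ->
  phi f A C y < phi f A C x.
Proof. intros hC hx hxy hy. pose proof (a_range C hC).
  apply (decr_lemma _ (fun c => Dd f A C c / (c + A))); [lra| |].
  intros c hc; apply phider; auto; lra.
  intros c hc. assert (Dd f A C c < 0) by (apply Dd_neg; auto; lra).
  assert (0 < - Dd f A C c / (c + A)) by (apply Rdiv_lt_0_compat; lra).
  unfold Rdiv in *; lra. Qed.

Lemma phi_cross C1 C2 s : 0 <= C1 -> C1 < C2 -> C2 <= 1 -> 0 < s < 1 ->
  phi f A C1 s < phi f A C2 s.
Proof. intros h1 h12 h2 hs. unfold phi.
  assert (f s C1 < f s C2).
  { apply (incr_lemma (fun c => f s c) (fun c => dC f s c)); auto.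
    intros c hc; apply fderC; auto.
    intros c hc. destruct hf as [_ [_ [_ h]]]. apply h; lra. }
  unfold Rdiv. apply Rmult_lt_compat_r; auto. apply Rinv_0_lt_compat; lra. Qed.

Lemma regions C s : 0 <= C <= 1 -> 0 <= s <= 1 ->
  (0 < s < Sstar C /\ 0 < Dd f A C s) \/ ((s = 0 \/ s = Sstar C) /\ Dd f A C s = 0)
  \/ (Sstar C < s /\ Dd f A C s < 0).
Proof. intros hC hs. pose proof (a_range C hC).
  destruct (Req_dec s 0) as [->|n0]. right; left; split; auto; apply Dd_0; auto.
  destruct (Rtotal_order s (Sstar C)) as [l|[e|g]].
  left; split; [lra|apply Dd_pos; auto; lra].
  right; left; split; auto. subst; apply Dd_a; auto.
  right; right; split; auto; apply Dd_neg; auto; lra. Qed.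

Lemma lamS_lamC C s : lamS f (s, C) - lamC f A (s, C) = Dd f A C s.
Proof. reflexivity. Qed.
Lemma lamC_phi C s : lamC f A (s, C) = phi f A C s.
Proof. reflexivity. Qed.

End S.
Lemma key_vf1 u w p q : 0 < q -> q < p -> ((u*p - w*q)/(p-q) <= u <-> u <= w).
Proof. intros hq hpq. set (t := (u*p - w*q)/(p-q)).
  assert (e : u*p - w*q = t*(p-q)) by (unfold t; field; lra).
  split; intro h; nra. Qed.
Lemma key_vf2 u w p q : 0 < q -> p < q -> ((u*p - w*q)/(p-q) <= u <-> w <= u).
Proof. intros hq hpq. set (t := (u*p - w*q)/(p-q)).
  assert (e : u*p - w*q = t*(p-q)) by (unfold t; field; lra).
  split; intro h; nra. Qed.
Lemma key_vi1 u w p q : 0 < q -> p < q -> (u <= (w*q - u*p)/(q-p) <-> u <= w).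
Proof. intros hq hpq. set (t := (w*q - u*p)/(q-p)).
  assert (e : w*q - u*p = t*(q-p)) by (unfold t; field; lra).
  split; intro h; nra. Qed.
Lemma key_vi2 u w p q : 0 < q -> q < p -> (u <= (w*q - u*p)/(q-p) <-> w <= u).
Proof. intros hq hpq. set (t := (w*q - u*p)/(q-p)).
  assert (e : w*q - u*p = t*(q-p)) by (unfold t; field; lra).
  split; intro h; nra. Qed.

Lemma lub_le (E : R -> Prop) x : Rbar_le (Lub_Rbar E) (Finite x) <-> forall v, E v -> v <= x.
Proof. destruct (Lub_Rbar_correct E) as [h1 h2]. split.
  - intros h v hv. apply (Rbar_le_trans (Finite v) (Lub_Rbar E) (Finite x)); auto.
  - intros h. apply h2. intros v hv. simpl. auto. Qed.

Lemma glb_ge (E : R -> Prop) x : Rbar_le (Finite x) (Glb_Rbar E) <-> forall v, E v -> x <= v.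
Proof. destruct (Glb_Rbar_correct E) as [h1 h2]. split.
  - intros h v hv. apply (Rbar_le_trans (Finite x) (Glb_Rbar E) (Finite v)); auto.
  - intros h. apply h2. intros v hv. simpl. auto. Qed.

Lemma f_phi f A C x : x + A <> 0 -> f x C = phi f A C x * (x + A).
Proof. intros h. unfold phi. field. auto. Qed.

Lemma between_ge0 a b s : 0 <= a -> 0 <= b -> between a b s -> 0 <= s.
Proof. unfold between. intros ha hb [h1 h2]. unfold Rmin in h1.
  destruct (Rle_dec a b); lra. Qed.

Lemma compat1 f A C xa xb : 0 < A -> 0 <= xa -> 0 <= xb ->
  Rbar_le (vf_S f xa xb C) (Finite (phi f A C xb)) <->
  (forall s, between xa xb s -> s <> xb ->
     (s < xb -> phi f A C xb <= phi f A C s) /\ (xb < s -> phi f A C s <= phi f A C xb)).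
Proof. intros hA ha hb. unfold vf_S. rewrite lub_le. split.
  - intros h s hs ns. pose proof (between_ge0 _ _ _ ha hb hs).
    specialize (h _ (ex_intro _ s (conj hs (conj ns eq_refl)))).
    rewrite (f_phi f A C xb), (f_phi f A C s) in h by lra.
    replace (xb - s) with ((xb + A) - (s + A)) in h by ring. split; intro l.
    + apply (proj1 (key_vf1 _ _ (xb + A) (s + A) ltac:(lra) ltac:(lra))) in h; exact h.
    + apply (proj1 (key_vf2 _ _ (xb + A) (s + A) ltac:(lra) ltac:(lra))) in h; exact h.
  - intros h v [s [hs [ns ->]]]. pose proof (between_ge0 _ _ _ ha hb hs).
    rewrite (f_phi f A C xb), (f_phi f A C s) by lra.
    replace (xb - s) with ((xb + A) - (s + A)) by ring.
    destruct (h s hs ns) as [h1 h2]. destruct (Rlt_or_le s xb) as [l|l].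
    + apply (proj2 (key_vf1 _ _ (xb + A) (s + A) ltac:(lra) ltac:(lra))). auto.
    + assert (xb < s) by lra.
      apply (proj2 (key_vf2 _ _ (xb + A) (s + A) ltac:(lra) ltac:(lra))). auto.
Qed.

Lemma compat2 f A C xa xb : 0 < A -> 0 <= xa -> 0 <= xb ->
  Rbar_le (Finite (phi f A C xa)) (vi_S f xa xb C) <->
  (forall s, between xa xb s -> s <> xa ->
     (xa < s -> phi f A C xa <= phi f A C s) /\ (s < xa -> phi f A C s <= phi f A C xa)).
Proof. intros hA ha hb. unfold vi_S. rewrite glb_ge. split.
  - intros h s hs ns. pose proof (between_ge0 _ _ _ ha hb hs).
    specialize (h _ (ex_intro _ s (conj hs (conj ns eq_refl)))).
    rewrite (f_phi f A C xa), (f_phi f A C s) in h by lra.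
    replace (s - xa) with ((s + A) - (xa + A)) in h by ring. split; intro l.
    + apply (proj1 (key_vi1 _ _ (xa + A) (s + A) ltac:(lra) ltac:(lra))) in h; exact h.
    + apply (proj1 (key_vi2 _ _ (xa + A) (s + A) ltac:(lra) ltac:(lra))) in h; exact h.
  - intros h v [s [hs [ns ->]]]. pose proof (between_ge0 _ _ _ ha hb hs).
    rewrite (f_phi f A C xa), (f_phi f A C s) by lra.
    replace (s - xa) with ((s + A) - (xa + A)) by ring.
    destruct (h s hs ns) as [h1 h2]. destruct (Rlt_or_le xa s) as [l|l].
    + apply (proj2 (key_vi1 _ _ (xa + A) (s + A) ltac:(lra) ltac:(lra))). auto.
    + assert (s < xa) by lra.
      apply (proj2 (key_vi2 _ _ (xa + A) (s + A) ltac:(lra) ltac:(lra))). auto.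
Qed.

Lemma inL_D f A x C : inL f A (x, C) <-> inBox (x, C) /\ 0 < Dd f A C x.
Proof. unfold inL, Dd, phi, lamS, lamC; simpl; split; intros [h1 h2]; split; auto; lra. Qed.
Lemma inT_D f A x C : inT f A (x, C) <-> inBox (x, C) /\ Dd f A C x = 0.
Proof. unfold inT, Dd, phi, lamS, lamC; simpl; split; intros [h1 h2]; split; auto; lra. Qed.
Lemma inR_D f A x C : inR f A (x, C) <-> inBox (x, C) /\ Dd f A C x < 0.
Proof. unfold inR, Dd, phi, lamS, lamC; simpl; split; intros [h1 h2]; split; auto; lra. Qed.

Theorem lemma3p3 (f : R -> R -> R) (A : R) (Sstar : R -> R)
  (hA : 0 < A) (hf : flux_hyp f) (hT : transition_fun f A Sstar)
  (UL U1 U2 UR : state)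
  (hUL : inBox UL) (hU1 : inBox U1) (hU2 : inBox U2) (hUR : inBox UR)
  (hC : snd UL < snd UR) (hne : UL <> UR)
  (hw1 : admissible f A (SWave UL U1))
  (hw2 : admissible f A (CWave U1 U2))
  (hw3 : admissible f A (SWave U2 UR)) :
  compatible f A (SWave UL U1 :: CWave U1 U2 :: SWave U2 UR :: nil) <->
  (inR f A UL /\ inT f A U1 /\ inL f A U2 /\
   0 <= fst UR /\ Rbar_le (Finite (fst UR)) (Sk f A Sstar U2)).
Proof.
  destruct UL as [xL cL], U1 as [x1 c1], U2 as [x2 c2], UR as [xR cR].
  destruct hw1 as [e1 n1]; destruct hw3 as [e3 n3]; simpl in e1, n1, e3, n3, hC.
  subst c1 c2.
  destruct hw2 as [hs hadm].
  change (lamC f A (x1, cL)) with (phi f A cL x1) in hs.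
  change (lamC f A (x2, cR)) with (phi f A cR x2) in hs.
  pose proof hUL as bL; pose proof hU1 as b1; pose proof hU2 as b2; pose proof hUR as bR.
  destruct hUL as [hxL hcL], hU1 as [hx1 _], hU2 as [hx2 hcR], hUR as [hxR _].
  simpl in hxL, hcL, hx1, hx2, hcR, hxR.
  rewrite !inL_D, !inT_D, !inR_D in hadm. rewrite inL_D, inT_D, inR_D.
  transitivity (Rbar_le (vf_S f xL x1 cL) (Finite (phi f A cL x1)) /\
                Rbar_le (Finite (phi f A cR x2)) (vi_S f x2 xR cR)).
  { cbn [compatible v_final v_init fst snd].
    change (lamC f A (x1, cL)) with (phi f A cL x1). rewrite <- hs. tauto. }
  rewrite compat1, compat2 by lra.
  pose proof (phi_inc f A Sstar hA hf hT) as INC.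
  pose proof (phi_dec f A Sstar hA hf hT) as DEC.
  pose proof (phi_cross f A hA hf) as CROSS.
  pose proof (phi_pos f A hA hf) as POS.
  pose proof (phi_0 f A hf) as P0.
  pose proof (a_range f A Sstar hT cL hcL) as ha.
  pose proof (a_range f A Sstar hT cR hcR) as hb.
  pose proof (regions f A Sstar hA hf hT) as REG.
  remember (Sstar cL) as a eqn:Ea. remember (Sstar cR) as b eqn:Eb.
  assert (hba : phi f A cL a < phi f A cR b).
  { apply (Rlt_le_trans _ (phi f A cR a)). apply CROSS; lra.
    destruct (Rtotal_order a b) as [l|[e|g]].
    - left; apply INC; lra.
    - rewrite e; lra.
    - left; apply DEC; lra. }
  split.
  - intros [c1 c2].
    assert (s1 : a <= x1).
    { destruct (Rle_or_lt a x1) as [l|l]; auto. exfalso.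
      destruct (Rtotal_order xL x1) as [l1|[e|g1]]; [|congruence|].
      - destruct (c1 xL) as [h _]. unfold between, Rmin, Rmax; destruct (Rle_dec xL x1); lra.
        lra. specialize (h l1). specialize (INC cL xL x1 hcL ltac:(lra) l1 ltac:(lra)). lra.
      - set (s := Rmin xL a).
        assert (x1 < s) by (unfold s, Rmin; destruct (Rle_dec xL a); lra).
        assert (s <= xL) by (unfold s, Rmin; destruct (Rle_dec xL a); lra).
        assert (s <= a) by (unfold s, Rmin; destruct (Rle_dec xL a); lra).
        destruct (c1 s) as [_ h]. unfold between, Rmin, Rmax; destruct (Rle_dec xL x1); lra.
        lra. specialize (h H). specialize (INC cL x1 s hcL ltac:(lra) H ltac:(lra)). lra. }
    assert (s2 : x2 <= b).
    { destruct (Rle_or_lt x2 b) as [l|l]; auto. exfalso.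
      destruct (Rtotal_order xR x2) as [l1|[e|g1]]; [|congruence|].
      - set (s := Rmax xR b).
        assert (s < x2) by (unfold s, Rmax; destruct (Rle_dec xR b); lra).
        assert (xR <= s) by (unfold s, Rmax; destruct (Rle_dec xR b); lra).
        assert (b <= s) by (unfold s, Rmax; destruct (Rle_dec xR b); lra).
        destruct (c2 s) as [_ h]. unfold between, Rmin, Rmax; destruct (Rle_dec x2 xR); lra.
        lra. specialize (h H). specialize (DEC cR s x2 hcR ltac:(lra) H ltac:(lra)). lra.
      - destruct (c2 xR) as [h _]. unfold between, Rmin, Rmax; destruct (Rle_dec x2 xR); lra.
        lra. specialize (h g1). specialize (DEC cR x2 xR hcR ltac:(lra) g1 ltac:(lra)). lra. }
    assert (hga : phi f A cL x1 <= phi f A cL a).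
    { destruct (Req_dec x1 a) as [e|ne]. rewrite e; lra. left; apply DEC; lra. }
    assert (s3 : x2 <> b).
    { intro e. rewrite e in hs. lra. }
    assert (s4 : x2 <> 0).
    { intro e. rewrite e, P0 in hs by lra. specialize (POS cL x1 hcL ltac:(lra)). lra. }
    destruct (REG cR x2 hcR hx2) as [[r1 r2]|[[[r1|r1] r2]|[r1 r2]]]; try lra.
    assert (x1a : x1 = a).
    { destruct hadm as [[h1 _]|[_ [h2|h2]]]; [|lra|lra].
      destruct (REG cL x1 hcL hx1) as [[q1 q2]|[[[q1|q1] q2]|[q1 q2]]]; try lra;
      destruct h1 as [[_ h1]|[_ h1]]; lra. }
    subst x1.
    assert (xLa : a < xL).
    { destruct (Rtotal_order xL a) as [l1|[e|g1]]; [|congruence|auto].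
      exfalso. destruct (c1 xL) as [h _]. unfold between, Rmin, Rmax; destruct (Rle_dec xL a); lra.
      lra. specialize (h l1). specialize (INC cL xL a hcL ltac:(lra) l1 ltac:(lra)). lra. }
    split; [split; [exact bL|]|split; [split; [exact b1|]|split; [split; [exact b2|lra]|]]].
    + destruct (REG cL xL hcL hxL) as [[q1 q2]|[[[q1|q1] q2]|[q1 q2]]]; lra.
    + rewrite Ea; apply Dd_a; auto.
    + unfold Sk; cbn [fst snd]. split; [lra|].
      destruct (excluded_middle_informative (x2 = Sstar cR)) as [e|ne]. lra.
      destruct (excluded_middle_informative _) as [h|h]; [|simpl; auto].
      destruct (constructive_indefinite_description _ h) as [S' [hS'1 [hS'2 hS'3]]].
      simpl. change (lamC f A (S', cR) = lamC f A (x2, cR)) with (phi f A cR S' = phi f A cR x2) in hS'3.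
      assert (bS : b < S').
      { destruct (Rle_or_lt S' b) as [l|l]; auto. exfalso.
        destruct (Rtotal_order S' x2) as [l1|[e|g1]]; [|congruence|].
        - specialize (INC cR S' x2 hcR ltac:(lra) l1 ltac:(lra)); lra.
        - specialize (INC cR x2 S' hcR ltac:(lra) g1 ltac:(lra)); lra. }
      destruct (Rle_or_lt xR S') as [l|l]; auto. exfalso.
      destruct (c2 xR) as [h' _]. unfold between, Rmin, Rmax; destruct (Rle_dec x2 xR); lra.
      lra. specialize (h' ltac:(lra)). specialize (DEC cR S' xR hcR ltac:(lra) l ltac:(lra)). lra.
  - cbn [fst snd]. intros [[_ hRL] [[_ hT1] [[_ hL2] [h0 hSk]]]].
    assert (px2 : 0 < x2 < b).
    { destruct (REG cR x2 hcR hx2) as [[q1 q2]|[[[q1|q1] q2]|[q1 q2]]]; lra. }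
    assert (x1a : x1 = a).
    { destruct (REG cL x1 hcL hx1) as [[q1 q2]|[[[q1|q1] q2]|[q1 q2]]]; try lra.
      rewrite q1, P0 in hs by lra. specialize (POS cR x2 hcR ltac:(lra)). lra. }
    subst x1.
    assert (xLa : a < xL).
    { destruct (REG cL xL hcL hxL) as [[q1 q2]|[[[q1|q1] q2]|[q1 q2]]]; lra. }
    split.
    + intros s hbs ns. unfold between, Rmin, Rmax in hbs.
      destruct (Rle_dec xL a) as [l|l]; [lra|]. split; intro l2; [lra|].
      left. apply DEC; lra.
    + intros s hbs ns. unfold between, Rmin, Rmax in hbs. split; intro l2.
      * destruct (Rle_dec x2 xR) as [l|l]; [|lra].
        destruct (Rle_or_lt s b) as [l3|l3]. left; apply INC; lra.
        destruct (Rle_or_lt (phi f A cR x2) (phi f A cR s)) as [l4|l4]; auto. exfalso.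
        assert (gb : phi f A cR x2 < phi f A cR b) by (apply INC; lra).
        destruct (Ranalysis5.IVT_interv (fun t => phi f A cR x2 - phi f A cR t) b s)
          as [z [hz ez]].
        { intros t ht. apply (continuity_pt_minus (fun _ => phi f A cR x2) (phi f A cR)).
          apply continuity_pt_const. intros u v; reflexivity.
          apply phi_cont; auto; lra. }
        lra. lra. lra.
        revert hSk. unfold Sk; cbn [fst snd].
        destruct (excluded_middle_informative (x2 = Sstar cR)) as [e|ne']. lra.
        destruct (excluded_middle_informative _) as [h|h].
        2:{ exfalso. apply h. exists z. split; [lra|]. split; [lra|].
            change (phi f A cR z = phi f A cR x2). lra. }
        destruct (constructive_indefinite_description _ h) as [S' [hS'1 [hS'2 hS'3]]].
        simpl. intro hSk.
        change (lamC f A (S', cR) = lamC f A (x2, cR)) with (phi f A cR S' = phi f A cR x2) in hS'3.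
        assert (bS : b < S').
        { destruct (Rle_or_lt S' b) as [l5|l5]; auto. exfalso.
          destruct (Rtotal_order S' x2) as [l1|[e|g1]]; [|congruence|].
          - specialize (INC cR S' x2 hcR ltac:(lra) l1 ltac:(lra)); lra.
          - specialize (INC cR x2 S' hcR ltac:(lra) g1 ltac:(lra)); lra. }
        destruct (Req_dec s S') as [e|ne2]. rewrite e in l4; lra.
        specialize (DEC cR s S' hcR ltac:(lra) ltac:(lra) ltac:(lra)). lra.
      * left. apply INC; try lra. destruct (Rle_dec x2 xR); lra.
Qed.
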